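(* Let $\mathcal{S}$ be a state space, $\mathcal{A}$ a finite action space, $\rho$ a distribution on $\mathcal{S}$, $\pi_{\mathrm{ref}}$ a full-support policy, $\beta>0$, $R>0$, $r^*:\mathcal{S}\times\mathcal{A}\to[0,R]$, and let $\Pi$ be a finite policy class with $\pi^*_{r^*}\in\Pi$ and $|\log(\pi(a|s)/\pi_{\mathrm{ref}}(a|s))|\le R/\beta$ for all $\pi\in\Pi$ and all $(s,a)$. Then for any bounded reward model $r:\mathcal{S}\times\mathcal{A}\to\mathbb{R}$ with associated optimal policy $\pi^*_r$, $$\mathrm{Cov}^{\pi^*_{r^*}|\pi^*_r}\le\min_{b\in\mathbb{R}}\mathbb{E}_{s\sim\rho}\Big[\mathbb{E}^2_{a\sim\pi^*_{r^*}(\cdot|s)}\Big[\exp\Big(\frac{|r^*(s,a)-r(s,a)-b|}{\beta}\Big)\Big]\Big].$$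
   Context: For a reward $r$, $\pi^*_r(a|s):=\pi_{\mathrm{ref}}(a|s)e^{r(s,a)/\beta}/\sum_{a'}\pi_{\mathrm{ref}}(a'|s)e^{r(s,a')/\beta}$ (the maximizer of $\mathbb{E}_{s\sim\rho}[\mathbb{E}_{a\sim\pi}r(s,a)-\beta\mathrm{KL}(\pi(\cdot|s)\|\pi_{\mathrm{ref}}(\cdot|s))]$). $\mathrm{Cov}^{\tilde\pi|\pi}:=\mathbb{E}_{s\sim\rho,a\sim\tilde\pi(\cdot|s)}[\tilde\pi(a|s)/\pi(a|s)]$. $\mathbb{E}^2[\cdot]$ denotes the square of the expectation. *)

(* Defs.v *)
From HB Require Import structures.
From mathcomp Require Import all_boot all_order all_algebra.
From mathcomp Require Import all_classical all_reals all_analysis.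
Set Implicit Arguments. Unset Strict Implicit. Unset Printing Implicit Defensive.
Import Order.TTheory GRing.Theory Num.Theory.
Local Open Scope ring_scope.

Section Defs.
Context {R : realType} {S : Type} {A : finType}.

Definition is_policy (pi : S -> A -> R) : Prop :=
  forall s, (forall a, 0 <= pi s a) /\ \sum_(a : A) pi s a = 1.

Definition pistar (pi_ref : S -> A -> R) (beta : R) (r : S -> A -> R)
  : S -> A -> R :=
  fun s a => pi_ref s a * expR (r s a / beta) /
             \sum_(a' : A) pi_ref s a' * expR (r s a' / beta).

Definition cov_inner (pt p : S -> A -> R) (s : S) : R :=
  \sum_(a : A) pt s a * (pt s a / p s a).

End Defs.

Definition Cov {R : realType} {d : measure_display} {S : measurableType d}
  {A : finType} (rho : probability S R) (pt p : S -> A -> R) : \bar R :=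
  (\int[rho]_s (cov_inner pt p s)%:E)%E.

(* Main.v *)
From HB Require Import structures.
From mathcomp Require Import all_boot all_order all_algebra.
From mathcomp Require Import all_classical all_reals all_analysis.
From mathcomp Require Import ring lra.
Import Order.TTheory GRing.Theory Num.Theory.
Require Import Defs.
Local Open Scope ring_scope.

Lemma pointwise (R : realType) (A : finType) (w x y : A -> R) (beta b : R) :
  (forall a, 0 < w a) -> 0 < beta ->
  \sum_a (w a * expR (x a / beta) / \sum_a w a * expR (x a / beta)) *
   ((w a * expR (x a / beta) / \sum_a w a * expR (x a / beta)) /
    (w a * expR (y a / beta) / \sum_a w a * expR (y a / beta))) <=
  (\sum_a (w a * expR (x a / beta) / \sum_a w a * expR (x a / beta))
     * expR (`|x a - y a - b| / beta)) ^+ 2.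
Proof.
move=> w0 b0.
set Zx := \sum_a w a * expR (x a / beta).
set Zy := \sum_a w a * expR (y a / beta).
set p := fun a => w a * expR (x a / beta) / Zx.
set q := fun a => w a * expR (y a / beta) / Zy.
rewrite -/(p _) -/(q _).
set E := fun a => expR (x a / beta).
set F := fun a => expR (y a / beta).
set c := expR (b / beta).
have E0 a : 0 < E a by apply: expR_gt0.
have F0 a : 0 < F a by apply: expR_gt0.
have c0 : 0 < c by apply: expR_gt0.
have [a0 _|] := pickP (fun _ : A => true); last first.
  move=> h; rewrite !big1 //= ?expr2 ?mulr0 // => a; by rewrite h.
have Zx0 : 0 < Zx.
  rewrite /Zx (bigD1 a0) //=; apply: ltr_pwDl; first by apply: mulr_gt0 => //; apply: expR_gt0.
  by apply: sumr_ge0 => a _; rewrite mulr_ge0 // ltW // expR_gt0.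
have Zy0 : 0 < Zy.
  rewrite /Zy (bigD1 a0) //=; apply: ltr_pwDl; first by apply: mulr_gt0 => //; apply: expR_gt0.
  by apply: sumr_ge0 => a _; rewrite mulr_ge0 // ltW // expR_gt0.
have p0 a : 0 <= p a by rewrite /p divr_ge0 // ?mulr_ge0 // ltW.
set u := fun a => expR ((x a - y a - b) / beta).
have hu a : u a = E a / (F a * c).
  rewrite /u !mulrBl !expRB /E /F /c.
  by rewrite invfM mulrA.
have h1 : \sum_a p a * (p a / q a) =
   (\sum_a p a * u a) * (\sum_a p a * (u a)^-1).
  have -> : \sum_a p a * (u a)^-1 = c * Zy / Zx.
    rewrite /Zy mulr_sumr mulr_suml; apply: eq_bigr => i _.
    rewrite hu /p /E /F.
    have := E0 i; have := F0 i; have := w0 i; rewrite /E /F.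
    move=> ? ? ?; field.
    by rewrite !gt_eqF.
  rewrite mulr_suml; apply: eq_bigr => i _.
  rewrite hu /p /q -/(E i) -/(F i).
  have := E0 i; have := F0 i; have := w0 i.
  move=> ? ? ?; field.
  by rewrite !gt_eqF.
rewrite h1 expr2. apply: ler_pM.
- by apply: sumr_ge0 => i _; rewrite mulr_ge0 // ltW // expR_gt0.
- by apply: sumr_ge0 => i _; rewrite mulr_ge0 // ?invr_ge0 ltW // expR_gt0.
- apply: ler_sum => i _; apply: ler_wpM2l => //.
  by rewrite ler_expR ler_pM2r ?invr_gt0 // ler_norm.
- apply: ler_sum => i _; apply: ler_wpM2l => //.
  by rewrite /u -expRN ler_expR -mulNr ler_pM2r ?invr_gt0 // -normrN ler_norm.
Qed.

Lemma mdiv (R : realType) (d : measure_display) (S : measurableType d)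
  (f g : S -> R) : measurable_fun setT f -> measurable_fun setT g ->
  (forall s, 0 < g s) -> measurable_fun setT (fun s => f s / g s).
Proof.
move=> mf mg g0.
have -> : (fun s => f s / g s) = (fun s => f s * expR (- ln (g s))).
  by apply/funext => s; rewrite expRN lnK // posrE.
apply: measurable_realfun.measurable_funM => //.
apply: measurableT_comp; first exact: measurable_realfun.measurable_expR.
apply: measurableT_comp; first exact: measurable_realfun.measurable_funN.
by apply: measurableT_comp; first exact: measurable_realfun.measurable_ln.
Qed.

Lemma mpistar (R : realType) (d : measure_display) (S : measurableType d)
  (A : finType) (pi_ref : S -> A -> R) (beta : R) (rr : S -> A -> R) a :
  (forall s a, 0 < pi_ref s a) ->
  (forall a, measurable_fun setT (fun s => pi_ref s a)) ->
  (forall a, measurable_fun setT (fun s => rr s a)) ->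
  measurable_fun setT (fun s => pistar pi_ref beta rr s a).
Proof.
move=> p0 mp mr.
have mt a' : measurable_fun setT (fun s => pi_ref s a' * expR (rr s a' / beta)).
  apply: measurable_realfun.measurable_funM => //.
  apply: measurableT_comp; first exact: measurable_realfun.measurable_expR.
  by apply: measurable_realfun.measurable_funM => //; exact: measurable_cst.
rewrite /pistar; apply: mdiv => //.
  exact: measurable_sum.
move=> s; have [a0 _|h] := pickP (fun _ : A => true); last by have := h a.
rewrite (bigD1 a0) //=; apply: ltr_pwDl; first by apply: mulr_gt0 => //; apply: expR_gt0.
by apply: sumr_ge0 => i _; rewrite mulr_ge0 // ltW // expR_gt0.
Qed.

Theorem lemmaE5 (R : realType) (d : measure_display) (S : measurableType d)
  (A : finType) (rho : probability S R) (pi_ref : S -> A -> R)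
  (beta Rmax : R) (rstar : S -> A -> R) (n : nat) (Pi : 'I_n -> S -> A -> R)
  (r : S -> A -> R) :
  is_policy pi_ref ->
  (forall s a, 0 < pi_ref s a) ->
  (forall a, measurable_fun setT (fun s => pi_ref s a)) ->
  0 < beta -> 0 < Rmax ->
  (forall s a, 0 <= rstar s a <= Rmax) ->
  (forall a, measurable_fun setT (fun s => rstar s a)) ->
  (forall i, is_policy (Pi i)) ->
  (exists i, Pi i = pistar pi_ref beta rstar) ->
  (forall i s a, `|ln (Pi i s a / pi_ref s a)| <= Rmax / beta) ->
  (exists M, forall s a, `|r s a| <= M) ->
  (forall a, measurable_fun setT (fun s => r s a)) ->
  forall b : R,
  (Cov rho (pistar pi_ref beta rstar) (pistar pi_ref beta r) <=
   \int[rho]_s ((\sum_(a : A) pistar pi_ref beta rstar s a *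
                   expR (`|rstar s a - r s a - b| / beta)) ^+ 2)%:E)%E.
Proof.
move=> _ p0 mp b0 _ _ mrs _ _ _ _ mr b.
have ps a : measurable_fun setT (fun s => pistar pi_ref beta rstar s a).
  exact: mpistar.
have pr a : measurable_fun setT (fun s => pistar pi_ref beta r s a).
  exact: mpistar.
have pge0 s a : 0 <= pistar pi_ref beta rstar s a.
  rewrite /pistar divr_ge0 // ?mulr_ge0 ?sumr_ge0 // => *; 
  by rewrite ?mulr_ge0 // ltW // expR_gt0.
have pgt0 s a : 0 < pistar pi_ref beta r s a.
  rewrite /pistar divr_gt0 // ?mulr_gt0 // ?expR_gt0 //.
  rewrite (bigD1 a) //=; apply: ltr_pwDl; first by apply: mulr_gt0 => //; apply: expR_gt0.
  by apply: sumr_ge0 => i _; rewrite mulr_ge0 // ltW // expR_gt0.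
rewrite /Cov; apply: ge0_le_integral => //.
- move=> s _; rewrite lee_fin /cov_inner; apply: sumr_ge0 => a _.
  by rewrite mulr_ge0 // divr_ge0 // ltW.
- apply/measurable_realfun.measurable_EFinP; rewrite /cov_inner.
  apply: measurable_sum => a.
  apply: measurable_realfun.measurable_funM => //.
  by apply: mdiv.
- apply/measurable_realfun.measurable_EFinP.
  apply: measurable_realfun.measurable_funX.
  apply: measurable_sum => a.
  apply: measurable_realfun.measurable_funM => //.
  apply: measurableT_comp; first exact: measurable_realfun.measurable_expR.
  apply: measurable_realfun.measurable_funM; last exact: measurable_cst.
  apply: measurableT_comp; first exact: measurable_realfun.normr_measurable.
  apply: measurable_realfun.measurable_funB; last exact: measurable_cst.
  exact: measurable_realfun.measurable_funB.
- move=> s _; rewrite lee_fin /cov_inner /pistar.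
  exact: (pointwise _ _ (pi_ref s) (rstar s) (r s) beta b (p0 s) b0).
Qed.
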